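(* Assume $\bar p=\mu\cdot\mathbf p=1/2$ and let $\eta$ be any distribution on $\mathcal R$. With $\mathbf r,\tilde{\mathbf r},\nu,\tilde\nu,\delta,\tilde\delta$ as in the context, $\nu=\tilde\nu$ and $\delta+\tilde\delta=1-2/\nu$.
   Context: Let $\mathcal R=\{1,\dots,N\}$ and let $K$ be a stochastic matrix on $\mathcal R$ whose Markov chain has a unique closed irreducible subset; let $\mu$ (row vector) be its unique stationary distribution. Fix $p:\mathcal R\to(0,1)$, $\mathbf p=(p(1),\dots,p(N))^t$, $\mathbf 1$ the all-ones column vector, $I$ the identity, $D_p$ the diagonal matrix with entries $p(i)$, $D_{1-p}=I-D_p$. Define $\mathbf r=(I-K+2(\mathbf 1-\mathbf p)\mu D_{1-p}K)^{-1}\mathbf p-\mathbf 1$, $\tilde{\mathbf r}=(I-K+2\mathbf p\,\mu D_pK)^{-1}(\mathbf 1-\mathbf p)-\mathbf 1$, $\nu=2+4\mu D_pK\mathbf r$, $\tilde\nu=2+4\mu D_{1-p}K\tilde{\mathbf r}$, $\delta=2\,\eta\cdot\mathbf r/\nu$, $\tilde\delta=2\,\eta\cdot\tilde{\mathbf r}/\tilde\nu$. *)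

(* Defs.v *)
From mathcomp Require Import all_boot all_order all_algebra.
Set Implicit Arguments. Unset Strict Implicit. Unset Printing Implicit Defensive.
Import Order.TTheory GRing.Theory Num.Theory.
Local Open Scope ring_scope.

Section MC.
Variables (R : realFieldType) (n : nat).

Definition stochastic (K : 'M[R]_n) : Prop :=
  (forall i j, 0 <= K i j) /\ (forall i, \sum_j K i j = 1).

Definition trans_rel (K : 'M[R]_n) : rel 'I_n := fun i j => 0 < K i j.

Definition closed_set (K : 'M[R]_n) (C : {set 'I_n}) : Prop :=
  forall i j, i \in C -> 0 < K i j -> j \in C.

Definition closed_irreducible (K : 'M[R]_n) (C : {set 'I_n}) : Prop :=
  C != set0 /\ closed_set K C /\
  (forall i j, i \in C -> j \in C -> connect (trans_rel K) i j).

Definition unique_closed_irreducible (K : 'M[R]_n) : Prop :=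
  exists C, closed_irreducible K C /\
            forall C', closed_irreducible K C' -> C' = C.

Definition distribution (m : 'rV[R]_n) : Prop :=
  (forall i, 0 <= m 0 i) /\ \sum_i m 0 i = 1.

Definition stationary (K : 'M[R]_n) (mu : 'rV[R]_n) : Prop :=
  distribution mu /\ mu *m K = mu.

Definition onesv : 'cV[R]_n := const_mx 1.
Definition pvec (p : 'I_n -> R) : 'cV[R]_n := \col_i p i.
Definition Dp (p : 'I_n -> R) : 'M[R]_n := diag_mx (\row_i p i).
Definition D1p (p : 'I_n -> R) : 'M[R]_n := diag_mx (\row_i (1 - p i)).

Definition rvec (K : 'M[R]_n) (mu : 'rV[R]_n) (p : 'I_n -> R) : 'cV[R]_n :=
  invmx (1%:M - K + 2%:R *: ((onesv - pvec p) *m mu *m D1p p *m K))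
    *m pvec p - onesv.

Definition rtvec (K : 'M[R]_n) (mu : 'rV[R]_n) (p : 'I_n -> R) : 'cV[R]_n :=
  invmx (1%:M - K + 2%:R *: (pvec p *m mu *m Dp p *m K))
    *m (onesv - pvec p) - onesv.

Definition nu (K : 'M[R]_n) (mu : 'rV[R]_n) (p : 'I_n -> R) : R :=
  2 + 4 * (mu *m Dp p *m K *m rvec K mu p) 0 0.

Definition nut (K : 'M[R]_n) (mu : 'rV[R]_n) (p : 'I_n -> R) : R :=
  2 + 4 * (mu *m D1p p *m K *m rtvec K mu p) 0 0.

Definition delta (K : 'M[R]_n) (mu eta : 'rV[R]_n) (p : 'I_n -> R) : R :=
  2 * (eta *m rvec K mu p) 0 0 / nu K mu p.

Definition deltat (K : 'M[R]_n) (mu eta : 'rV[R]_n) (p : 'I_n -> R) : R :=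
  2 * (eta *m rtvec K mu p) 0 0 / nut K mu p.

End MC.

(* Main.v *)
Require Import Defs.
From mathcomp Require Import all_boot all_order all_algebra.
From mathcomp Require Import ring lra.
Set Implicit Arguments. Unset Strict Implicit. Unset Printing Implicit Defensive.
Import Order.TTheory GRing.Theory Num.Theory.
Local Open Scope ring_scope.

Section Aux.
Variables (R : realFieldType) (n : nat) (K : 'M[R]_n).

Lemma closed_reach (S : {set 'I_n}) : closed_set K S ->
  forall i j, i \in S -> connect (trans_rel K) i j -> j \in S.
Proof.
move=> cS i j iS /connectP [s]; elim: s i iS => [|a s IH] i iS /=.
  by move=> _ ->.
case/andP => eia ps; apply: IH ps; exact: cS eia.
Qed.

Lemma exists_ci (S : {set 'I_n}) : closed_set K S -> S != set0 ->
  exists C', closed_irreducible K C' /\ C' \subset S.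
Proof.
move=> cS /set0Pn [i0 i0S].
pose reach i := [set j | connect (trans_rel K) i j].
case: (arg_minnP (fun i => #|reach i|) i0S) => i iS0 imin.
have iS : i \in S := iS0.
exists (reach i); split; last first.
  apply/subsetP => j; rewrite inE; exact: (@closed_reach S cS i j iS).
split; first by apply/set0Pn; exists i; rewrite inE connect0.
split.
  move=> j k; rewrite !inE => cij Kjk; apply: connect_trans cij (connect1 _).
  exact: Kjk.
move=> j k; rewrite !inE => cij cik.
have jS : j \in S := @closed_reach S cS i j iS cij.
have sub : reach j \subset reach i.
  apply/subsetP => l; rewrite !inE; exact: connect_trans cij.
have eq : reach j = reach i by apply/eqP; rewrite eqEcard sub /= (imin j (jS : mem S j)).
have : i \in reach j by rewrite eq inE connect0.
rewrite inE => cji; exact: connect_trans cji cik.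
Qed.

Lemma harm_max (C : {set 'I_n}) (z : 'I_n -> R) : stochastic K ->
  (forall C', closed_irreducible K C' -> C' = C) ->
  (forall i, \sum_j K i j * z j = z i) ->
  forall i0 j, i0 \in C -> z j <= z i0.
Proof.
move=> [Kge0 Ksum] uC hz i0 j i0C.
pose S := [set i | [forall k, z k <= z i]].
have SP : forall i, (i \in S) = [forall k, z k <= z i] by move=> i; rewrite inE.
have Sn0 : S != set0.
  apply/set0Pn; exists [arg max_(i > i0) z i]%O.
  rewrite SP; case: arg_maxP => // m _ mmax; apply/forallP => k; exact: mmax.
have cS : closed_set K S.
  move=> i k; rewrite !SP => /forallP iM Kik.
  have e : \sum_l K i l * (z i - z l) = 0.
    under eq_bigr do rewrite mulrBr.
    by rewrite sumrB -mulr_suml Ksum mul1r hz subrr.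
  have ge : forall l, true -> 0 <= K i l * (z i - z l).
    by move=> l _; rewrite mulr_ge0 ?subr_ge0 ?iM.
  have := psumr_eq0P ge e (i := k) isT.
  move/eqP; rewrite mulf_eq0 (gt_eqF Kik) /= subr_eq0 => /eqP zik.
  apply/forallP => l; rewrite -zik; exact: iM.
have [C' [ciC' subC']] := exists_ci cS Sn0.
rewrite (uC _ ciC') in subC'.
have := subsetP subC' _ i0C; rewrite SP => /forallP; exact.
Qed.

Lemma harm_const (z : 'I_n -> R) : stochastic K -> unique_closed_irreducible K ->
  (forall i, \sum_j K i j * z j = z i) -> forall i j, z i = z j.
Proof.
move=> st [C [[Cn0 _] uC]] hz.
case/set0Pn: Cn0 => i0 i0C.
have hz' : forall i, \sum_j K i j * (- z j) = - z i.
  by move=> i; rewrite -(hz i) -sumrN; apply: eq_bigr => j _; rewrite mulrN.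
have c : forall j, z j = z i0.
  move=> j; apply/eqP; rewrite eq_le (harm_max st uC hz j i0C).
  by rewrite -lerN2 (harm_max (z := fun k => - z k) st uC hz' j i0C).
by move=> i j; rewrite !c.
Qed.

End Aux.

Section Key.
Variables (R : realFieldType) (n : nat) (K : 'M[R]_n) (mu : 'rV[R]_n).

Definition Mq (Qc : 'cV[R]_n) (q : 'I_n -> R) :=
  1%:M - K + 2%:R *: (Qc *m mu *m Dp q *m K).

Lemma sdef (q : 'I_n -> R) (x : 'cV[R]_n) :
  (mu *m Dp q *m K *m x) 0 0 = \sum_i mu 0 i * q i * (K *m x) i 0.
Proof.
rewrite -!mulmxA mxE; apply: eq_bigr => i _.
by rewrite /Dp mul_diag_mx !mxE mulrA.
Qed.

Lemma Mx_entry Qc q (x : 'cV[R]_n) i :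
  (Mq Qc q *m x) i 0 = x i 0 - (K *m x) i 0 +
     2 * Qc i 0 * (mu *m Dp q *m K *m x) 0 0.
Proof.
rewrite /Mq mulmxDl mulmxBl mul1mx -scalemxAl -!mulmxA !mxE big_ord1.
by rewrite mulrA mxE.
Qed.

Lemma muK (x : 'cV[R]_n) : mu *m K = mu ->
  \sum_i mu 0 i * (K *m x) i 0 = \sum_i mu 0 i * x i 0.
Proof.
move=> st; transitivity ((mu *m (K *m x)) 0 0); first by rewrite mxE.
by rewrite mulmxA st mxE.
Qed.

End Key.

Lemma Kconst (R : realFieldType) (n : nat) (K : 'M[R]_n) (x : 'cV[R]_n) c k :
  stochastic K -> (forall j, x j 0 = c) -> (K *m x) k 0 = c.
Proof.
move=> [_ Ks] hx; rewrite mxE; under eq_bigr do rewrite hx.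
by rewrite -mulr_suml Ks mul1r.
Qed.

Lemma wsum (R : realFieldType) (n : nat) (a b c d : 'I_n -> R) (s : R) :
  \sum_i a i * (b i - c i + s * d i) =
  \sum_i a i * b i - \sum_i a i * c i + s * \sum_i a i * d i.
Proof.
rewrite mulr_sumr -sumrB -big_split /=; apply: eq_bigr => i _; ring.
Qed.

Lemma Mq_unit (R : realFieldType) (n : nat) (K : 'M[R]_n) (mu : 'rV[R]_n)
  (q : 'I_n -> R) (Qc : 'cV[R]_n) :
  stochastic K -> unique_closed_irreducible K -> stationary K mu ->
  \sum_i mu 0 i * q i = 1 / 2 -> (forall i, Qc i 0 = q i) ->
  Mq K mu Qc q \in unitmx.
Proof.
move=> st uci [[mu0 mu1] stat] hmq hQc.
have inj : forall x : 'cV[R]_n, Mq K mu Qc q *m x = 0 -> x = 0.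
  move=> x H.
  set s := (mu *m Dp q *m K *m x) 0 0.
  have E0 : forall i, x i 0 - (K *m x) i 0 + s * (2 * q i) = 0.
    move=> i; have := congr1 (fun A : 'cV[R]_n => A i 0) H.
    rewrite Mx_entry hQc mxE -/s [s * _]mulrC => ->; by rewrite mxE.
  have : \sum_i mu 0 i * (x i 0 - (K *m x) i 0 + s * (2 * q i)) = 0.
    by rewrite big1 // => i _; rewrite E0 mulr0.
  rewrite wsum muK // subrr add0r.
  have -> : \sum_i mu 0 i * (2 * q i) = 1.
    rewrite -(mulr1 1) -{2}(mulfV (_ : (2:R) != 0)); last by rewrite pnatr_eq0.
    under eq_bigr do rewrite mulrCA.
    by rewrite -mulr_sumr hmq; field.
  rewrite mulr1 => s0.
  have hx : forall i, \sum_j K i j * x j 0 = x i 0.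
    move=> i; have := E0 i; rewrite s0 mul0r addr0 mxE => /eqP.
    by rewrite subr_eq0 => /eqP ->.
  have cst := harm_const st uci hx.
  apply/matrixP => i j; rewrite ord1 mxE.
  have Kx : forall k, (K *m x) k 0 = x i 0.
    by move=> k; apply: Kconst st _ => l; rewrite (cst l i).
  move: s0; rewrite /s sdef; under eq_bigr do rewrite Kx.
  rewrite -mulr_suml hmq => /eqP; rewrite mulf_eq0 => /orP [|/eqP //].
  by rewrite mul1r invr_eq0 pnatr_eq0.
rewrite unitmxE unitfE -det_tr; apply/negP => /det0P [v vn0 vM].
have h : Mq K mu Qc q *m v^T = 0.
  by rewrite -(trmxK (Mq K mu Qc q *m v^T)) trmx_mul trmxK vM trmx0.
move: (inj _ h) => /(congr1 trmx); rewrite trmxK trmx0 => v0.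
by rewrite v0 eqxx in vn0.
Qed.

Lemma jensen (R : realFieldType) (n : nat) (K : 'M[R]_n) (x : 'cV[R]_n) i :
  stochastic K -> (K *m x) i 0 ^+ 2 <= \sum_j K i j * x j 0 ^+ 2.
Proof.
move=> [K0 K1]; set w := (K *m x) i 0.
have hw : w = \sum_j K i j * x j 0 by rewrite /w mxE.
have : 0 <= \sum_j K i j * (x j 0 - w) ^+ 2.
  by apply: sumr_ge0 => j _; rewrite mulr_ge0 ?sqr_ge0.
have E : forall j, K i j * (x j 0 - w) ^+ 2 =
   K i j * x j 0 ^+ 2 - (2 * w) * (K i j * x j 0) + w ^+ 2 * K i j.
  by move=> j; ring.
under eq_bigr do rewrite E.
rewrite big_split /= sumrB -!mulr_sumr -hw K1.
move=> h; have : 0 <= \sum_j K i j * x j 0 ^+ 2 - w ^+ 2.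
  by move: h; congr (_ <= _); ring.
by rewrite subr_ge0.
Qed.

Lemma Mq_sol (R : realFieldType) (n : nat) (K : 'M[R]_n) (mu : 'rV[R]_n)
  (q : 'I_n -> R) (Qc v : 'cV[R]_n) :
  stochastic K -> unique_closed_irreducible K -> stationary K mu ->
  (forall i, 0 < q i < 1) ->
  \sum_i mu 0 i * q i = 1 / 2 -> (forall i, Qc i 0 = q i) ->
  (forall i, v i 0 = 1 - q i) ->
  let x := invmx (Mq K mu Qc q) *m v in
  [/\ forall i, x i 0 - (K *m x) i 0 = 1 - 2 * q i,
      \sum_i mu 0 i * q i * (K *m x) i 0 = 1 / 2 &
      0 < \sum_i mu 0 i * (1 - q i) * (K *m x) i 0].
Proof.
move=> st uci stt hq hmq hQc hv x.
have U := Mq_unit st uci stt hmq hQc.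
have Mx : Mq K mu Qc q *m x = v := mulKVmx U v.
case: stt => [[mu0 mu1] stat].
set s := (mu *m Dp q *m K *m x) 0 0.
have E0 : forall i, x i 0 - (K *m x) i 0 + s * (2 * q i) = 1 - q i.
  move=> i; have := congr1 (fun A : 'cV[R]_n => A i 0) Mx.
  by rewrite Mx_entry hQc -/s [s * _]mulrC => ->; rewrite hv.
have hs : s = 1 / 2.
  have : \sum_i mu 0 i * (x i 0 - (K *m x) i 0 + s * (2 * q i)) =
         \sum_i mu 0 i * (1 - q i) by apply: eq_bigr => i _; rewrite E0.
  rewrite wsum muK // subrr add0r.
  under [X in _ = X]eq_bigr do rewrite mulrBr mulr1.
  rewrite sumrB mu1 hmq.
  under eq_bigr do rewrite mulrCA.
  rewrite -mulr_sumr hmq => h.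
  have e2 : (2 * (1 / 2) : R) = 1 by field.
  by rewrite e2 mulr1 in h; rewrite h; field.
have F1 : forall i, x i 0 - (K *m x) i 0 = 1 - 2 * q i.
  by move=> i; have := E0 i; rewrite hs => h; rewrite -[LHS]addr0; lra.
have F2 : \sum_i mu 0 i * q i * (K *m x) i 0 = 1 / 2 by rewrite -sdef.
split => //.
have J : \sum_i mu 0 i * (K *m x) i 0 ^+ 2 <= \sum_i mu 0 i * x i 0 ^+ 2.
  pose x2 : 'cV[R]_n := \col_j (x j 0 ^+ 2).
  have x2E : forall i, x2 i 0 = x i 0 ^+ 2 by move=> i; rewrite /x2 [LHS]mxE.
  have -> : \sum_i mu 0 i * x i 0 ^+ 2 = \sum_i mu 0 i * (K *m x2) i 0.
    by rewrite muK //; apply: eq_bigr => i _; rewrite x2E.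
  apply: ler_sum => i _; apply: ler_wpM2l; first exact: mu0.
  have -> : (K *m x2) i 0 = \sum_j K i j * x j 0 ^+ 2.
    by rewrite [LHS]mxE; apply: eq_bigr => j _; rewrite x2E.
  exact: jensen.
have Id : \sum_i mu 0 i * x i 0 ^+ 2 - \sum_i mu 0 i * (K *m x) i 0 ^+ 2 =
   2 * \sum_i mu 0 i * (1 - q i) * (K *m x) i 0
   - 4 * \sum_i mu 0 i * (q i * (1 - q i)).
  rewrite -sumrB.
  transitivity (\sum_i ((2 * (mu 0 i * (1 - q i) * (K *m x) i 0)
      - 4 * (mu 0 i * (q i * (1 - q i))))
      + (mu 0 i - 2 * (mu 0 i * q i * (K *m x) i 0)))).
    apply: eq_bigr => i _.
    have hx : x i 0 = (K *m x) i 0 + (1 - 2 * q i) by rewrite -F1; ring.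
    rewrite hx; ring.
  by rewrite big_split /= !sumrB -!mulr_sumr mu1 F2; field.
have P : 0 < \sum_i mu 0 i * (q i * (1 - q i)).
  have ge : forall i, true -> 0 <= mu 0 i * (q i * (1 - q i)).
    move=> i _; case/andP: (hq i) => q0 q1.
    by rewrite mulr_ge0 // mulr_ge0 // ?subr_ge0 ltW.
  have s0 : 0 <= \sum_i mu 0 i * (q i * (1 - q i)) by apply: sumr_ge0.
  rewrite lt_def s0 andbT.
  apply/negP => /eqP h0.
  have m0 : forall i, mu 0 i = 0.
    move=> i; have := psumr_eq0P ge h0 (i := i) isT.
    case/andP: (hq i) => q0 q1.
    move/eqP; rewrite !mulf_eq0 (gt_eqF q0) subr_eq0 /=.
    case/orP => [/eqP //|/eqP e]; by rewrite -e ltxx in q1.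
  move: mu1; rewrite big1 => [/eqP|i _]; last exact: m0.
  by rewrite eq_sym oner_eq0.
lra.
Qed.

Lemma nu_expr (R : realFieldType) (n : nat) (K : 'M[R]_n) (mu : 'rV[R]_n)
  (q : 'I_n -> R) (x : 'cV[R]_n) : stochastic K ->
  (mu *m Dp q *m K *m (x - onesv R n)) 0 0 =
  \sum_i mu 0 i * q i * (K *m x) i 0 - \sum_i mu 0 i * q i.
Proof.
move=> st; rewrite sdef -sumrB; apply: eq_bigr => i _.
have -> : (K *m (x - onesv R n)) i 0 = (K *m x) i 0 - 1.
  rewrite mulmxBr [LHS]mxE [X in _ + X]mxE (@Kconst _ _ K (onesv R n) 1) //.
  by move=> j; rewrite /onesv mxE.
ring.
Qed.

Theorem proposition4p3 (R : realFieldType) (n : nat)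
  (K : 'M[R]_n) (mu eta : 'rV[R]_n) (p : 'I_n -> R) :
  stochastic K ->
  unique_closed_irreducible K ->
  stationary K mu ->
  (forall i, 0 < p i < 1) ->
  (mu *m pvec p) 0 0 = 1 / 2 ->
  distribution eta ->
  nu K mu p = nut K mu p /\
  delta K mu eta p + deltat K mu eta p = 1 - 2 / nu K mu p.
Proof.
move=> st uci stt hp hmp [eta0 eta1].
have mu1 : \sum_i mu 0 i = 1 by case: stt => [[]].
have A1 : \sum_i mu 0 i * p i = 1 / 2.
  by rewrite -hmp mxE; apply: eq_bigr => i _; rewrite mxE.
have A2 : \sum_i mu 0 i * (1 - p i) = 1 / 2.
  under eq_bigr do rewrite mulrBr mulr1.
  by rewrite sumrB mu1 A1; field.
have hq1 : forall i, 0 < 1 - p i < 1.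
  by move=> i; case/andP: (hp i) => h1 h2; apply/andP; split; lra.
have Hx := @Mq_sol R n K mu (fun i => 1 - p i) (onesv R n - pvec p) (pvec p)
  st uci stt hq1 A2 (fun i => ltac:(by rewrite !mxE)) (fun i => ltac:(by rewrite mxE; ring)).
have Hy := @Mq_sol R n K mu p (pvec p) (onesv R n - pvec p)
  st uci stt hp A1 (fun i => ltac:(by rewrite !mxE)) (fun i => ltac:(by rewrite !mxE)).
move: Hx Hy => /=.
set x := invmx _ *m pvec p.
set y := invmx _ *m (onesv R n - pvec p).
case=> Fx1 Fx2 Fx3 [Fy1 Fy2 Fy3].
have rE : rvec K mu p = x - onesv R n := erefl.
have tE : rtvec K mu p = y - onesv R n := erefl.
have dE : D1p p = Dp (fun i => 1 - p i) := erefl.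
clearbody x y.
have hz : forall i, \sum_j K i j * (x j 0 + y j 0) = x i 0 + y i 0.
  move=> i; under eq_bigr do rewrite mulrDr.
  have e1 : forall w : 'cV[R]_n, \sum_j K i j * w j 0 = (K *m w) i 0.
    by move=> w; rewrite mxE.
  rewrite big_split /= !e1.
  by have := Fx1 i; have := Fy1 i; lra.
have cst := harm_const st uci hz.
have [C [[Cn0 _] _]] := uci.
case/set0Pn: Cn0 => i0 _.
set c := x i0 0 + y i0 0.
have zc : forall i, x i 0 + y i 0 = c by move=> i; exact: cst.
have KK : forall i, (K *m x) i 0 + (K *m y) i 0 = c.
  by move=> i; have := Fx1 i; have := Fy1 i; have := zc i; lra.
have Sx : \sum_i mu 0 i * p i * (K *m x) i 0 = c / 2 - 1 / 2.
  transitivity (\sum_i (c * (mu 0 i * p i) - mu 0 i * p i * (K *m y) i 0)).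
    by apply: eq_bigr => i _; rewrite -(KK i); ring.
  by rewrite sumrB -mulr_sumr A1 Fy2; field.
have Sy : \sum_i mu 0 i * (1 - p i) * (K *m y) i 0 = c / 2 - 1 / 2.
  transitivity (\sum_i (c * (mu 0 i * (1 - p i)) - mu 0 i * (1 - p i) * (K *m x) i 0)).
    by apply: eq_bigr => i _; rewrite -(KK i); ring.
  by rewrite sumrB -mulr_sumr A2 Fx2; field.
have Sx' : \sum_i mu 0 i * (1 - (1 - p i)) * (K *m x) i 0 = c / 2 - 1 / 2.
  by rewrite -Sx; apply: eq_bigr => i _; ring.
have nuE : nu K mu p = 2 + 4 * (c / 2 - 1 / 2 - 1 / 2).
  by rewrite /nu rE nu_expr // Sx A1.
have nutE : nut K mu p = 2 + 4 * (c / 2 - 1 / 2 - 1 / 2).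
  by rewrite /nut tE dE nu_expr // Sy A2.
have ex : (eta *m rvec K mu p) 0 0 + (eta *m rtvec K mu p) 0 0 = c - 2.
  rewrite rE tE !mxE -big_split /=.
  transitivity (\sum_j eta 0 j * (c - 2)).
    apply: eq_bigr => j _; rewrite !mxE -(zc j); ring.
  by rewrite -mulr_suml eta1 mul1r.
have c1 : 1 < c by lra.
split; first by rewrite nuE nutE.
rewrite /delta /deltat -/(nu K mu p) nutE nuE.
move: ex; set X := (eta *m _) 0 0; set Y := (eta *m _) 0 0 => ex.
have hX : X = c - 2 - Y by rewrite -ex; ring.
rewrite hX; field.
lra.
Qed.
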